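(* Let $L$ be a semiprime right Leibniz algebra and let $Q(L)$ be the Leibniz algebra of equivalence classes of partial derivations on essential ideals described in the context, with $L$ embedded via $\varphi(x)=(R_x)_L$. Then $Q(L)$ is semiprime and is an algebra of quotients of $L$ (i.e., of $\varphi(L)$). Moreover, $Q(L)$ is maximal among the algebras of quotients of $L$: if $S$ is an algebra of quotients of $L$, then the map $\psi:S\to Q(L)$, $s\mapsto (R_s)_{(L:s)}$ (where $R_s(x)=[x,s]$ for $x\in(L:s)$) is a monomorphism which is the identity when restricted to $L$ (i.e., $\psi(x)=\varphi(x)$ for $x\in L$).
   Context: A right Leibniz algebra satisfies $[x,[y,z]]=[[x,y],z]-[[x,z],y]$. Ideals are subspaces $I$ with $[I,L]\subseteq I$, $[L,I]\subseteq I$; $I^2$ is the span of $[x,y]$, $x,y\in I$. $L$ is semiprime if $[I,I]\ne\{0\}$ for every nonzero ideal $I$. An ideal is essential if it meets every nonzero ideal nontrivially; $\mathscr{J}_e(L)$ denotes the set of essential ideals. $\mathrm{PDer}(I,L)$ is the set of linear maps $\delta:I\to L$ with $\delta([x,y])=[\delta(x),y]+[x,\delta(y)]$. $Q(L)$ is the set of pairs $(\delta,I)$, $I\in\mathscr{J}_e(L)$, $\delta\in\mathrm{PDer}(I,L)$, modulo $(\delta,I)\equiv(\mu,J)$ iff $\delta,\mu$ agree on some $K\in\mathscr{J}_e(L)$ with $K\subseteq I\cap J$; the class is written $\delta_I$, with operations $p\delta_I=(p\delta)_I$, $(p\delta)(y)=\delta(py)$, $\delta_I+\mu_J=(\delta+\mu)_{I\cap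 J}$, $[\delta_I,\mu_J]=[\delta,\mu]_{(I\cap J)^2}$ with $[\delta,\mu](x)=\mu\delta(x)-\delta\mu(x)$; $\varphi(x)=(R_x)_L$ with $R_x(y)=[y,x]$. For a Leibniz algebra $S$ containing $L$ as subalgebra and $s\in S$: for $x\in L$ let $R_x,L_x$ act on $S$ by $R_x(u)=[u,x]$, $L_x(u)=[x,u]$, $\mathscr{A}(L)$ the associative algebra generated by them, ${}_L(s)=\mathbb{F}s+\{\sum\xi_i(s):\xi_i\in\mathscr{A}(L)\}$, $(L:s)=\{x\in L:[x,{}_L(s)]\subseteq L,[{}_L(s),x]\subseteq L\}$. $S$ is an algebra of quotients of $L$ if for all $p,q\in S$, $p\ne0$, there is $x\in(L:q)$ with $[x,p]\ne0$ or $y\in(L:q)$ with $[p,y]\ne0$. *)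

(* Defs.v *)
From mathcomp Require Import all_boot all_algebra.
From Stdlib Require Import ClassicalEpsilon.
Set Implicit Arguments. Unset Strict Implicit. Unset Printing Implicit Defensive.
Import GRing.Theory.
Local Open Scope ring_scope.

Record leibniz (F : fieldType) := Leibniz {
  lsort :> lmodType F;
  lbr : lsort -> lsort -> lsort;
  lbrDl : forall a x y z, lbr (a *: x + y) z = a *: lbr x z + lbr y z;
  lbrDr : forall a x y z, lbr z (a *: x + y) = a *: lbr z x + lbr z y;
  lbr_leibniz : forall x y z,
      lbr x (lbr y z) = lbr (lbr x y) z - lbr (lbr x z) y }.
Arguments lbr {F L} : rename.

(* A "bracket space": a carrier with a domain predicate, an equality
   (possibly a setoid equivalence, used for Q(L) whose elements are
   equivalence classes), and the vector-space/bracket operations.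
   Leibniz algebras are bracket spaces with full domain and Leibniz
   equality; Q(L) is the bracket space of valid representatives modulo
   the equivalence of the paper. *)
Record bspace (F : fieldType) := BSpace {
  bsort :> Type;
  bdom : bsort -> Prop;
  beq : bsort -> bsort -> Prop;
  bzero : bsort;
  badd : bsort -> bsort -> bsort;
  bscale : F -> bsort -> bsort;
  bbr : bsort -> bsort -> bsort }.
Arguments bdom {F B} : rename.
Arguments beq {F B} : rename.
Arguments bzero {F} B : rename.
Arguments badd {F B} : rename.
Arguments bscale {F B} : rename.
Arguments bbr {F B} : rename.

Section Generic.
Variables (F : fieldType) (B : bspace F).

Definition bsum (s : seq B) : B := foldr badd (bzero B) s.

(* subspace of B (a subset of the set of classes: saturated for beq) *)
Definition bsubspace (I : B -> Prop) : Prop :=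
  (forall x, I x -> bdom x) /\
  (forall x y, I x -> beq x y -> bdom y -> I y) /\
  I (bzero B) /\
  (forall x y, I x -> I y -> I (badd x y)) /\
  (forall a x, I x -> I (bscale a x)).

Definition bideal (I : B -> Prop) : Prop :=
  bsubspace I /\
  (forall x y, I x -> bdom y -> I (bbr x y) /\ I (bbr y x)).

Definition bnonzero (I : B -> Prop) : Prop :=
  exists x, I x /\ ~ beq x (bzero B).

Definition bsemiprime : Prop :=
  forall I, bideal I -> bnonzero I ->
    exists x y, I x /\ I y /\ ~ beq (bbr x y) (bzero B).

Definition bessential (I : B -> Prop) : Prop :=
  bideal I /\
  forall J, bideal J -> bnonzero J ->
    exists x, I x /\ J x /\ ~ beq x (bzero B).

End Generic.

Definition bmono (F : fieldType) (A B : bspace F) (f : A -> B) : Prop :=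
  (forall x, bdom x -> bdom (f x)) /\
  (forall x y, bdom x -> bdom y -> beq x y -> beq (f x) (f y)) /\
  (forall a x y, bdom x -> bdom y ->
     beq (f (badd (bscale a x) y)) (badd (bscale a (f x)) (f y))) /\
  (forall x y, bdom x -> bdom y -> beq (f (bbr x y)) (bbr (f x) (f y))) /\
  (forall x y, bdom x -> bdom y -> beq (f x) (f y) -> beq x y).

Arguments bmono {F} A B f.

Definition bspace_of (F : fieldType) (L : leibniz F) : bspace F :=
  @BSpace F L (fun _ => True) (@eq L) 0 +%R *:%R (@lbr F L).

Section QL.
Variables (F : fieldType) (L : leibniz F).

Record qrep := QRep { qI : L -> Prop; qd : L -> L }.

Definition pder (I : L -> Prop) (d : L -> L) : Prop :=
  (forall a x y, I x -> I y -> d (a *: x + y) = a *: d x + d y) /\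
  (forall x y, I x -> I y -> d (lbr x y) = lbr (d x) y + lbr x (d y)).

Definition qvalid (p : qrep) : Prop :=
  bessential (B := bspace_of L) (qI p) /\ pder (qI p) (qd p).

Definition qequiv (p q : qrep) : Prop :=
  exists K : L -> Prop, bessential (B := bspace_of L) K /\
    (forall x, K x -> qI p x /\ qI q x) /\
    (forall x, K x -> qd p x = qd q x).

Definition sqspan (I : L -> Prop) (z : L) : Prop :=
  exists s : seq (F * (L * L)),
    (forall t, t \in s -> I t.2.1 /\ I t.2.2) /\
    z = \sum_(t <- s) t.1 *: lbr t.2.1 t.2.2.

Definition qzero : qrep := QRep (fun _ => True) (fun _ => 0).
Definition qadd (p q : qrep) : qrep :=
  QRep (fun x => qI p x /\ qI q x) (fun x => qd p x + qd q x).
Definition qscale (a : F) (p : qrep) : qrep :=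
  QRep (qI p) (fun y => qd p (a *: y)).
Definition qbr (p q : qrep) : qrep :=
  QRep (sqspan (fun x => qI p x /\ qI q x))
       (fun x => qd q (qd p x) - qd p (qd q x)).

Definition Qsp : bspace F :=
  @BSpace F qrep qvalid qequiv qzero qadd qscale qbr.

Definition phi (x : L) : Qsp := QRep (fun _ => True) (fun y => lbr y x).

End QL.

Section Quotients.
Variables (F : fieldType) (L : leibniz F) (S : bspace F) (i : L -> S).

(* a word in the generators R_x (true) / L_x (false), applied to s:
   the head of the list is the outermost operator *)
Definition wapp (w : seq (bool * L)) (s : S) : S :=
  foldr (fun t u => if t.1 then bbr u (i t.2) else bbr (i t.2) u) s w.

(* u in _L(s) = F s + { xi(s) : xi in A(L) }, A(L) = span of nonempty words *)
Definition lsub (s u : S) : Prop :=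
  exists (a : F) (ws : seq (F * seq (bool * L))),
    (forall t, t \in ws -> (0 < size t.2)%N) /\
    beq u (badd (bscale a s) (bsum [seq bscale t.1 (wapp t.2 s) | t <- ws])).

Definition lcolon (s : S) (x : L) : Prop :=
  forall u, bdom u -> lsub s u ->
    (exists y, beq (bbr (i x) u) (i y)) /\ (exists y, beq (bbr u (i x)) (i y)).

Definition is_aoq : Prop :=
  bmono (bspace_of L) S i /\
  forall p q, bdom p -> bdom q -> ~ beq p (bzero S) ->
    (exists x, lcolon q x /\ ~ beq (bbr (i x) p) (bzero S)) \/
    (exists y, lcolon q y /\ ~ beq (bbr p (i y)) (bzero S)).

End Quotients.
Arguments is_aoq {F L} S i.

Definition preim (F : fieldType) (L S : leibniz F) (i : L -> S) (y : S) : L :=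
  epsilon (inhabits 0) (fun x => i x = y).

Definition psi (F : fieldType) (L S : leibniz F) (i : L -> S) (s : S) : Qsp L :=
  QRep (lcolon (S := bspace_of S) i s) (fun x => preim i (lbr (i x) s)).

(* Main.v *)
Require Import Defs.
From mathcomp Require Import all_boot all_algebra.
From Stdlib Require Import Classical ClassicalEpsilon.
Set Implicit Arguments. Unset Strict Implicit. Unset Printing Implicit Defensive.
Import GRing.Theory.
Local Open Scope ring_scope.

Section Br.
Variables (F : fieldType) (M : leibniz F).
Implicit Types x y z : M.

Lemma brDl x y z : lbr (x + y) z = lbr x z + lbr y z.
Proof. by have := lbrDl 1 x y z; rewrite !scale1r. Qed.
Lemma brDr x y z : lbr z (x + y) = lbr z x + lbr z y.
Proof. by have := lbrDr 1 x y z; rewrite !scale1r. Qed.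
Lemma br0l z : lbr 0 z = 0 :> M.
Proof. by apply: (@addrI _ (lbr 0 z)); rewrite -brDl !addr0. Qed.
Lemma br0r z : lbr z 0 = 0 :> M.
Proof. by apply: (@addrI _ (lbr z 0)); rewrite -brDr !addr0. Qed.
Lemma brZl a x z : lbr (a *: x) z = a *: lbr x z.
Proof. by have := lbrDl a x 0 z; rewrite !addr0 br0l addr0. Qed.
Lemma brZr a x z : lbr z (a *: x) = a *: lbr z x.
Proof. by have := lbrDr a x 0 z; rewrite !addr0 br0r addr0. Qed.
Lemma brNl x z : lbr (- x) z = - lbr x z.
Proof. by rewrite -scaleN1r brZl scaleN1r. Qed.
Lemma brNr x z : lbr z (- x) = - lbr z x.
Proof. by rewrite -scaleN1r brZr scaleN1r. Qed.
Lemma brBl x y z : lbr (x - y) z = lbr x z - lbr y z.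
Proof. by rewrite brDl brNl. Qed.
Lemma brBr x y z : lbr z (x - y) = lbr z x - lbr z y.
Proof. by rewrite brDr brNr. Qed.
Lemma br_assoc x y z : lbr (lbr x y) z = lbr x (lbr y z) + lbr (lbr x z) y.
Proof. by rewrite lbr_leibniz subrK. Qed.
End Br.

Ltac zpull t := try rewrite [in LHS](addrC t); repeat rewrite [in LHS](addrAC _ t).
Ltac zc :=
  match goal with
  | |- 0 = 0 => reflexivity
  | |- ?u - ?u = 0 => apply: subrr
  | |- - ?u + ?u = 0 => apply: addNr
  | |- ?s + (- ?u) = 0 => zpull u; rewrite subrK; zc
  | |- ?s + ?t = 0 => zpull (GRing.opp t); rewrite addrK; zc
  end.
Ltac zsolve := apply/eqP; rewrite -subr_eq0; apply/eqP;
  rewrite ?opprD ?opprK ?oppr0 ?addr0 ?add0r ?opprD ?opprK ?addrA; zc.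

Lemma zid1 (V : zmodType) (A B C D E G : V) :
  A + B - ((A - C + D) + (E + G)) = (C - E) + ((B - G) - D).
Proof. zsolve. Qed.

Section Ideals.
Variables (F : fieldType) (L : leibniz F).
Implicit Types (x y z w : L) (I J K D E : L -> Prop).

Definition ideal I := bideal (B := bspace_of L) I.
Definition ess I := bessential (B := bspace_of L) I.
Definition semip := bsemiprime (bspace_of L).

Lemma idealP I : ideal I <->
  [/\ I 0, (forall x y, I x -> I y -> I (x + y)), (forall a x, I x -> I (a *: x))
    & (forall x y, I x -> I (lbr x y) /\ I (lbr y x))].
Proof.
split.
  by case=> [[_ [_ [H0 [HD HZ]]]] HB]; split=> // x y Ix; apply: HB.
case=> H0 HD HZ HB; split; first split=> //; first split=> //.
  by move=> x y Ix <-.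
by move=> x y Ix _; apply: HB.
Qed.

Section I.
Variables (I : L -> Prop) (HI : ideal I).
Lemma id0 : I 0. Proof. by case/idealP: HI. Qed.
Lemma idD x y : I x -> I y -> I (x + y). Proof. by case/idealP: HI => _ H _ _; apply: H. Qed.
Lemma idZ a x : I x -> I (a *: x). Proof. by case/idealP: HI => _ _ H _; apply: H. Qed.
Lemma idlin a x y : I x -> I y -> I (a *: x + y). Proof. by move=> ? ?; apply: idD => //; apply: idZ. Qed.
Lemma idN x : I x -> I (- x). Proof. by move=> ?; rewrite -scaleN1r; apply: idZ. Qed.
Lemma idB x y : I x -> I y -> I (x - y). Proof. by move=> ? ?; apply: idD => //; apply: idN. Qed.
Lemma idBrl x y : I x -> I (lbr x y). Proof. by case/idealP: HI => _ _ _ H Ix; case: (H _ y Ix). Qed.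
Lemma idBrr x y : I x -> I (lbr y x). Proof. by case/idealP: HI => _ _ _ H Ix; case: (H _ y Ix). Qed.
End I.

Lemma ideal_inter I J : ideal I -> ideal J -> ideal (fun x => I x /\ J x).
Proof.
move=> HI HJ; apply/idealP; split.
- by split; apply: id0.
- by move=> x y [? ?] [? ?]; split; apply: idD.
- by move=> a x [? ?]; split; apply: idZ.
- move=> x y [? ?] /=; split; split; [apply: (idBrl HI) | apply: (idBrl HJ) | apply: (idBrr HI) | apply: (idBrr HJ)]; done.
Qed.

Lemma ideal_True : ideal (fun _ => True).
Proof. by apply/idealP. Qed.

Lemma essP I : ess I <-> ideal I /\
  (forall J, ideal J -> (exists x, J x /\ x <> 0) -> exists x, I x /\ J x /\ x <> 0).
Proof. by []. Qed.

Lemma ess_ideal I : ess I -> ideal I. Proof. by case. Qed.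

Lemma ess_True : ess (fun _ => True).
Proof. apply/essP; split; first exact: ideal_True. by move=> J _ [x [Jx nx]]; exists x. Qed.

Lemma ess_inter I J : ess I -> ess J -> ess (fun x => I x /\ J x).
Proof.
move=> [HI EI] [HJ EJ]; apply/essP; split; first exact: ideal_inter.
move=> K HK nK.
have [x [Jx [Kx nx]]] := EJ K HK nK.
have [y [Iy [[Jy Ky] ny]]] := EI _ (ideal_inter HJ HK) (ex_intro _ x (conj (conj Jx Kx) nx)).
by exists y.
Qed.

Lemma semipP : semip <-> forall I, ideal I -> (exists x, I x /\ x <> 0) ->
  exists x y, I x /\ I y /\ lbr x y <> 0.
Proof. by []. Qed.

Lemma sqspan0 I : sqspan I 0.
Proof. by rewrite /sqspan; exists [::]; split=> //; rewrite big_nil. Qed.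

Lemma sqspan_lin I a x y : sqspan I x -> sqspan I y -> sqspan I (a *: x + y).
Proof.
move=> [s [Hs ->]] [r [Hr ->]].
rewrite /sqspan; exists ([seq (a * t.1, t.2) | t <- s] ++ r); split.
  move=> t; rewrite mem_cat => /orP [/mapP [u us ->]|]; last exact: Hr.
  exact: Hs u us.
by rewrite big_cat big_map /= scaler_sumr; congr (_ + _); apply: eq_bigr => t _; rewrite scalerA.
Qed.

Lemma sqspan_gen I x y : I x -> I y -> sqspan I (lbr x y).
Proof.
move=> Ix Iy; rewrite /sqspan; exists [:: (1, (x, y))]; split; last by rewrite big_seq1 scale1r.
by move=> t; rewrite inE => /eqP ->.
Qed.

Lemma sqspan_ind I (P : L -> Prop) :
  P 0 -> (forall a x y, P x -> P y -> P (a *: x + y)) ->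
  (forall x y, I x -> I y -> P (lbr x y)) -> forall z, sqspan I z -> P z.
Proof.
move=> P0 Plin Pg z [s [Hs ->]]; elim: s Hs => [|t s IH] Hs; first by rewrite big_nil.
rewrite big_cons; apply: Plin.
  by case: (Hs t (mem_head _ _)) => ? ?; apply: Pg.
by apply: IH => u us; apply: Hs; rewrite inE us orbT.
Qed.

Lemma sqspan_mono I J z : (forall x, I x -> J x) -> sqspan I z -> sqspan J z.
Proof.
move=> IJ; apply: sqspan_ind; [exact: sqspan0 | by move=> *; apply: sqspan_lin |].
by move=> x y Ix Iy; apply: sqspan_gen; apply: IJ.
Qed.

Lemma sqspan_sub I z : ideal I -> sqspan I z -> I z.
Proof.
move=> HI; apply: sqspan_ind; [exact: id0 | by move=> *; apply: idlin |].
by move=> x y Ix _; apply: idBrl.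
Qed.

Lemma sqspan_ideal I : ideal I -> ideal (sqspan I).
Proof.
move=> HI; apply/idealP; split.
- exact: sqspan0.
- by move=> x y Hx Hy; rewrite -[x]scale1r; apply: sqspan_lin.
- by move=> a x Hx; rewrite -[a *: x]addr0; apply: sqspan_lin => //; apply: sqspan0.
move=> x y; move: x; apply: (sqspan_ind (P := fun x => sqspan I (lbr x y) /\ sqspan I (lbr y x))).
- by rewrite br0l br0r; split; apply: sqspan0.
- by move=> a u v [? ?] [? ?]; rewrite lbrDl lbrDr; split; apply: sqspan_lin.
move=> u v Iu Iv; split.
  rewrite br_assoc -[lbr u _]scale1r; apply: sqspan_lin; apply: sqspan_gen => //.
  - exact: (idBrl HI). - exact: (idBrl HI).
rewrite lbr_leibniz -scaleN1r addrC; apply: sqspan_lin; apply: sqspan_gen => //.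
  - exact: (idBrr HI). - exact: (idBrr HI).
Qed.

End Ideals.

Section Semiprime.
Variables (F : fieldType) (L : leibniz F) (sp : semip L).
Implicit Types (x y z w : L) (I J K D E : L -> Prop).

Lemma ess_sq K : ess K -> ess (sqspan K).
Proof.
move=> EK; have HK := ess_ideal EK; apply/essP; split; first exact: sqspan_ideal.
move=> J HJ nJ; have [x [Kx [Jx nx]]] := (proj2 EK) J HJ nJ.
have HKJ := ideal_inter HK HJ.
have [a [b [[Ka Ja] [[Kb Jb] nab]]]] := (proj1 (semipP L) sp) _ HKJ (ex_intro _ x (conj (conj Kx Jx) nx)).
exists (lbr a b); split; first exact: sqspan_gen.
by split=> //; apply: (idBrl HJ).
Qed.

Lemma ann_zero K z : ess K -> (forall k, K k -> lbr k z = 0) -> z = 0.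
Proof.
move=> EK Hz; have HK := ess_ideal EK.
pose A := fun z => forall k, K k -> lbr k z = 0.
have HA : ideal A.
  apply/idealP; split.
  - by move=> k _; rewrite br0r.
  - by move=> x y Ax Ay k Kk; rewrite brDr Ax // Ay // addr0.
  - by move=> a x Ax k Kk; rewrite brZr Ax // scaler0.
  move=> x y Ax; split=> k Kk.
    by rewrite lbr_leibniz (Ax k Kk) br0l (Ax _ (idBrl HK y Kk)) subr0.
  by rewrite lbr_leibniz (Ax k Kk) br0l (Ax _ (idBrl HK y Kk)) subrr.
apply: NNPP => nz.
have [x [Kx [Ax nx]]] := (proj2 EK) A HA (ex_intro _ z (conj Hz nz)).
have [a [b [[Ka Aa] [[Kb Ab] nab]]]] :=
  (proj1 (semipP L) sp) _ (ideal_inter HK HA) (ex_intro _ x (conj (conj Kx Ax) nx)).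
by apply: nab; apply: Ab.
Qed.

End Semiprime.

Section Pder.
Variables (F : fieldType) (L : leibniz F).
Implicit Types (x y z w : L) (I J K D E : L -> Prop).
Variables (D : L -> Prop) (HD : ideal D) (g : L -> L) (Hg : pder D g).

Lemma pder_lin a x y : D x -> D y -> g (a *: x + y) = a *: g x + g y.
Proof. by case: Hg => H _; apply: H. Qed.
Lemma pder_br x y : D x -> D y -> g (lbr x y) = lbr (g x) y + lbr x (g y).
Proof. by case: Hg => _ H; apply: H. Qed.
Lemma pder0 : g 0 = 0.
Proof.
have := pder_lin 1 (id0 HD) (id0 HD); rewrite !scale1r addr0 => h.
by apply: (@addrI _ (g 0)); rewrite -h addr0.
Qed.
Lemma pderD x y : D x -> D y -> g (x + y) = g x + g y.
Proof. by move=> Dx Dy; have := pder_lin 1 Dx Dy; rewrite !scale1r. Qed.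
Lemma pderZ a x : D x -> g (a *: x) = a *: g x.
Proof. by move=> Dx; have := pder_lin a Dx (id0 HD); rewrite !addr0 pder0 addr0. Qed.
Lemma pderN x : D x -> g (- x) = - g x.
Proof. by move=> Dx; rewrite -scaleN1r pderZ // scaleN1r. Qed.
Lemma pderB x y : D x -> D y -> g (x - y) = g x - g y.
Proof. by move=> Dx Dy; rewrite pderD ?pderN //; apply: (idN HD). Qed.

Lemma pder_sq E z : ideal E -> sqspan (fun x => D x /\ E x) z -> D z /\ E (g z).
Proof.
move=> HE; move: z; apply: sqspan_ind.
- by split; [apply: (id0 HD) | rewrite pder0; apply: (id0 HE)].
- move=> a x y [Dx Ex] [Dy Ey]; split; first exact: (idlin HD).
  by rewrite pder_lin //; apply: (idlin HE).
move=> x y [Dx Ex] [Dy Ey]; split; first exact: (idBrl HD).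
by rewrite pder_br //; apply: (idD HE); [apply: (idBrr HE) | apply: (idBrl HE)].
Qed.

End Pder.

Lemma pder_ext (F : fieldType) (L : leibniz F) (D : L -> Prop) (f h : L -> L) :
  ideal D -> (forall z, D z -> f z = h z) -> pder D f -> pder D h.
Proof.
move=> HD E [H1 H2]; split.
  move=> a x y Dx Dy; rewrite -!E //; [exact: H1 | exact: (idlin HD)].
move=> x y Dx Dy; rewrite -!E //; [exact: H2 | exact: (idBrl HD)].
Qed.

Section Comm.
Variables (F : fieldType) (L : leibniz F).
Variables (D : L -> Prop) (HD : ideal D) (g : L -> L) (Hg : pder D g) (y : L).

Lemma comm_lin a x w : D x -> D w ->
  lbr (g (a *: x + w)) y - g (lbr (a *: x + w) y) =
  a *: (lbr (g x) y - g (lbr x y)) + (lbr (g w) y - g (lbr w y)).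
Proof.
move=> Dx Dw.
rewrite (pder_lin Hg a Dx Dw) !lbrDl (pder_lin Hg a (idBrl HD y Dx) (idBrl HD y Dw)).
rewrite scalerBr; zsolve.
Qed.

Lemma comm_br x w : D x -> D w ->
  lbr (g (lbr x w)) y - g (lbr (lbr x w) y) =
  lbr (lbr (g x) y - g (lbr x y)) w + lbr x (lbr (g w) y - g (lbr w y)).
Proof.
move=> Dx Dw.
have Dwy := idBrl HD y Dw; have Dxy := idBrl HD y Dx.
rewrite (pder_br Hg Dx Dw) (br_assoc x w y).
rewrite (pderD Hg (idBrr HD x Dwy) (idBrl HD w Dxy)).
rewrite (pder_br Hg Dx Dwy) (pder_br Hg Dxy Dw).
rewrite brDl brBl brBr (lbr_leibniz (g x) w y) (lbr_leibniz x (g w) y).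
zsolve.
Qed.

Lemma pder_commR : pder D (fun z => lbr (g z) y - g (lbr z y)).
Proof. split=> [a x w Dx Dw|x w Dx Dw]; [exact: comm_lin | exact: comm_br]. Qed.

Lemma pder_commL : pder D (fun z => g (lbr z y) - lbr (g z) y).
Proof.
split=> [a x w Dx Dw|x w Dx Dw].
  rewrite -[LHS]opprB (comm_lin a Dx Dw) !scalerBr; zsolve.
rewrite -[LHS]opprB (comm_br Dx Dw) !brBl !brBr; zsolve.
Qed.

End Comm.

Section Q.
Variables (F : fieldType) (L : leibniz F) (sp : semip L).
Implicit Types (x y z w : L) (I J K D E : L -> Prop) (p q u v : qrep L).

Lemma qequiv_refl p : ess (qI p) -> qequiv p p.
Proof. by move=> E; exists (qI p); split=> //; split. Qed.

Lemma qequiv_sym p q : qequiv p q -> qequiv q p.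
Proof.
move=> [K [EK [H1 H2]]]; exists K; split=> //; split=> z Kz.
  by case: (H1 z Kz).
by rewrite H2.
Qed.

Lemma qequiv_trans p q r : qequiv p q -> qequiv q r -> qequiv p r.
Proof.
move=> [K1 [E1 [H1 G1]]] [K2 [E2 [H2 G2]]].
exists (fun x => K1 x /\ K2 x); split; first exact: ess_inter.
split=> z [k1 k2]; first by split; [case: (H1 z k1) | case: (H2 z k2)].
by rewrite G1 // G2.
Qed.

Lemma phi_valid x : qvalid (phi x).
Proof.
split; first exact: ess_True.
split=> [a y z _ _ | y z _ _] /=; first by rewrite lbrDl.
by rewrite br_assoc addrC.
Qed.

Lemma phi_lin a x y : qequiv (phi (a *: x + y)) (qadd (qscale a (phi x)) (phi y)).
Proof.
exists (fun _ => True); split; first exact: ess_True.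
by split=> z _ //=; rewrite lbrDr brZl.
Qed.

Lemma phi_br x y : qequiv (phi (lbr x y)) (qbr (phi x) (phi y)).
Proof.
exists (sqspan (fun _ => True /\ True)); split.
  by apply: ess_sq => //; apply: ess_inter; apply: ess_True.
by split=> z Kz //=; rewrite lbr_leibniz.
Qed.

Lemma phi_inj x y : qequiv (phi x) (phi y) -> x = y.
Proof.
move=> [K [EK [_ H]]]; apply/eqP; rewrite -subr_eq0; apply/eqP.
by apply: (ann_zero sp EK) => k Kk; have /= E := H k Kk; rewrite brBr E subrr.
Qed.

Lemma br_phi_l p x : qvalid p -> qI p x -> qequiv (qbr (phi x) p) (phi (qd p x)).
Proof.
move=> [Ep Hp] Dx; have HD := ess_ideal Ep.
exists (sqspan (qI p)); split; first exact: ess_sq.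
split=> z Kz.
  by split=> //; apply: sqspan_mono Kz => w.
have Dz := sqspan_sub HD Kz.
by rewrite /= (pder_br Hp Dz Dx); zsolve.
Qed.

Lemma nonzero_pt p D : qvalid p -> ess D -> ~ qequiv p (qzero L) ->
  exists x, qI p x /\ D x /\ qd p x <> 0.
Proof.
move=> [Ep Hp] ED nz; apply: NNPP => H; apply: nz.
exists (fun x => qI p x /\ D x); split; first exact: ess_inter.
split=> z [pz Dz] //.
by apply: NNPP => nz'; apply: H; exists z.
Qed.

Lemma Q_semiprime : bsemiprime (Qsp L).
Proof.
move=> I [[HIv [HIs [HI0 [HIadd HIsc]]]] HIbr] [p [Ip np]].
have vp := HIv p Ip.
have [x [px [_ nx]]] := nonzero_pt vp (@ess_True _ L) np.
have Iw : I (phi (qd p x)).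
  apply: (HIs (qbr (phi x) p)); last exact: phi_valid.
    by case: (HIbr p (phi x) Ip (phi_valid x)).
  exact: br_phi_l.
pose J := fun z => I (phi z).
have HJ : ideal J.
  apply/idealP; split.
  - apply: (HIs (qzero L)) => //; last exact: phi_valid.
    by exists (fun _ => True); split; [exact: ess_True | split=> z _ //=; rewrite br0r].
  - move=> y z Jy Jz; apply: (HIs (qadd (phi y) (phi z))); [exact: HIadd | | exact: phi_valid].
    by exists (fun _ => True); split; [exact: ess_True | split=> w _ //=; rewrite brDr].
  - move=> a y Jy; apply: (HIs (qscale a (phi y))); [exact: HIsc | | exact: phi_valid].
    by exists (fun _ => True); split; [exact: ess_True | split=> w _ //=; rewrite brZl brZr].
  move=> y z Jy; case: (HIbr (phi y) (phi z) Jy (phi_valid z)) => H1 H2; split.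
    by apply: (HIs _ (phi (lbr y z)) H1); [apply: qequiv_sym; apply: phi_br | exact: phi_valid].
  by apply: (HIs _ (phi (lbr z y)) H2); [apply: qequiv_sym; apply: phi_br | exact: phi_valid].
have [a [b [Ja [Jb nab]]]] := (proj1 (semipP L) sp) J HJ (ex_intro _ (qd p x) (conj Iw nx)).
exists (phi a), (phi b); split=> //; split=> // [[K [EK [_ HK]]]].
apply: nab; apply: (ann_zero sp EK) => k Kk.
by have := HK k Kk => /= <-; rewrite lbr_leibniz.
Qed.

Definition good D v := exists g, pder D g /\ exists K, ess K /\
  (forall z, K z -> D z /\ qI v z) /\ (forall z, K z -> qd v z = g z).

Section Good.
Variables (D : L -> Prop) (ED : ess D).
Let HD := ess_ideal ED.

Lemma good_zero : good D (qzero L).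
Proof.
exists (fun _ => 0); split.
  by split=> *; rewrite ?scaler0 ?addr0 ?br0l ?br0r ?addr0.
by exists D; split=> //; split.
Qed.

Lemma good_self q : qvalid q -> good (qI q) q.
Proof. by move=> [Eq Hq]; exists (qd q); split=> //; exists (qI q); split=> //; split. Qed.

Lemma good_add v1 v2 : good D v1 -> good D v2 -> good D (qadd v1 v2).
Proof.
move=> [g1 [H1 [K1 [E1 [A1 B1]]]]] [g2 [H2 [K2 [E2 [A2 B2]]]]].
exists (fun z => g1 z + g2 z); split.
  split=> [a x y Dx Dy | x y Dx Dy].
    by rewrite (pder_lin H1 a Dx Dy) (pder_lin H2 a Dx Dy) scalerDr; zsolve.
  by rewrite (pder_br H1 Dx Dy) (pder_br H2 Dx Dy) brDl brDr; zsolve.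
exists (fun z => K1 z /\ K2 z); split; first exact: ess_inter.
split=> z [k1 k2] /=; last by rewrite B1 // B2.
by case: (A1 z k1) => ? ?; case: (A2 z k2).
Qed.

Lemma good_scale a v : good D v -> good D (qscale a v).
Proof.
move=> [g [Hg [K [EK [A B]]]]].
exists (fun z => g (a *: z)); split.
  split=> [b x y Dx Dy | x y Dx Dy].
    by rewrite (pderZ HD Hg a (idlin HD b Dx Dy)) (pder_lin Hg b Dx Dy) (pderZ HD Hg a Dx) (pderZ HD Hg a Dy) scalerDr !scalerA mulrC.
  by rewrite (pderZ HD Hg a (idBrl HD y Dx)) (pder_br Hg Dx Dy) (pderZ HD Hg a Dx) (pderZ HD Hg a Dy) brZl brZr scalerDr.
exists K; split=> //; split=> z Kz /=; first exact: A.
by rewrite B //; apply: (idZ (ess_ideal EK)).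
Qed.

Lemma good_brR y v : good D v -> good D (qbr v (phi y)).
Proof.
move=> [g [Hg [K [EK [A B]]]]].
exists (fun z => lbr (g z) y - g (lbr z y)); split; first exact: pder_commR.
exists (sqspan K); split; first exact: ess_sq.
have HK := ess_ideal EK.
split=> z Kz; have Kz' := sqspan_sub HK Kz.
  split; first by case: (A z Kz').
  by apply: sqspan_mono Kz => w Kw; split=> //; case: (A w Kw).
by have Kzy := idBrl HK y Kz'; rewrite /= !B.
Qed.

Lemma good_brL y v : good D v -> good D (qbr (phi y) v).
Proof.
move=> [g [Hg [K [EK [A B]]]]].
exists (fun z => g (lbr z y) - lbr (g z) y); split; first exact: pder_commL.
exists (sqspan K); split; first exact: ess_sq.
have HK := ess_ideal EK.
split=> z Kz; have Kz' := sqspan_sub HK Kz.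
  split; first by case: (A z Kz').
  by apply: sqspan_mono Kz => w Kw; split=> //; case: (A w Kw).
by have Kzy := idBrl HK y Kz'; rewrite /= !B.
Qed.

Lemma good_equiv u v : good D v -> qequiv u v -> good D u.
Proof.
move=> [g [Hg [K [EK [A B]]]]] [K2 [E2 [A2 B2]]].
exists g; split=> //; exists (fun z => K z /\ K2 z); split; first exact: ess_inter.
split=> z [Kz K2z]; last by rewrite B2 // B.
by split; [case: (A z Kz) | case: (A2 z K2z)].
Qed.

Lemma good_lcolon u x : good D u -> D x ->
  (exists y, qequiv (qbr (phi x) u) (phi y)) /\ (exists y, qequiv (qbr u (phi x)) (phi y)).
Proof.
move=> [g [Hg [K [EK [A B]]]]] Dx; have HK := ess_ideal EK.
split; [exists (g x) | exists (- g x)];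
  (exists (sqspan K); split; first exact: ess_sq);
  (split=> z Kz; have Kz' := sqspan_sub HK Kz; have Dz := proj1 (A z Kz');
    first by (split=> //; apply: sqspan_mono Kz => w Kw; split=> //; case: (A w Kw))).
  by have Kzx := idBrl HK x Kz'; rewrite /= !B // (pder_br Hg Dz Dx); zsolve.
by have Kzx := idBrl HK x Kz'; rewrite /= !B // (pder_br Hg Dz Dx) brNr; zsolve.
Qed.

End Good.

Lemma lcolon_Q q x : qvalid q -> qI q x -> lcolon (S := Qsp L) (@phi F L) q x.
Proof.
move=> vq qx u _ [a [ws [_ Hu]]].
have Eq := proj1 vq.
suff G : good (qI q) u by exact: (good_lcolon G qx).
apply: (good_equiv _ Hu).
apply: good_add; first by apply: (good_scale Eq); apply: good_self.
elim: ws {Hu} => [|[c w] ws IH] /=; first exact: good_zero.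
apply: good_add => //; apply: (good_scale Eq).
elim: w => [|[b y] w IHw] /=; first exact: good_self.
by case: b; [apply: (good_brR Eq) | apply: (good_brL Eq)].
Qed.

End Q.

Section QA.
Variables (F : fieldType) (L : leibniz F) (sp : semip L).

Lemma Q_aoq : is_aoq (Qsp L) (@phi F L).
Proof.
split.
  split; first by move=> x _; exact: phi_valid.
  split; first by move=> x y _ _ /= ->; apply: qequiv_refl; exact: (proj1 (phi_valid y)).
  split; first by move=> a x y _ _; exact: phi_lin.
  split; first by move=> x y _ _; exact: (phi_br sp).
  by move=> x y _ _; exact: (phi_inj sp).
move=> p q vp vq np.
have [x [px [qx nx]]] := nonzero_pt vp (proj1 vq) np.
left; exists x; split; first exact: lcolon_Q.
move=> [K [EK [HK1 HK2]]]; apply: nx; apply: (ann_zero sp EK) => k Kk.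
have [Ep Hp] := vp.
have Kp : qI p k.
  case: (HK1 k Kk) => H _.
  by case: (sqspan_sub (ideal_inter (ideal_True L) (ess_ideal Ep)) H).
have /= E := HK2 k Kk.
by rewrite -E (pder_br Hp Kp px); zsolve.
Qed.

End QA.

Section Psi.
Variables (F : fieldType) (L : leibniz F) (sp : semip L) (S : leibniz F) (i : L -> S)
  (Hi : is_aoq (bspace_of S) i).
Implicit Types (x y z w : L) (s u : S).

Lemma ilin a x y : i (a *: x + y) = a *: i x + i y.
Proof. by case: Hi => [[_ [_ [H _]]] _]; apply: H. Qed.
Lemma ibr x y : i (lbr x y) = lbr (i x) (i y).
Proof. by case: Hi => [[_ [_ [_ [H _]]]] _]; apply: H. Qed.
Lemma iinj x y : i x = i y -> x = y.
Proof. by case: Hi => [[_ [_ [_ [_ H]]]] _]; apply: H. Qed.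
Lemma i0 : i 0 = 0.
Proof. by have := ilin 1 0 0; rewrite !scale1r addr0 => h; apply: (@addrI _ (i 0)); rewrite -h addr0. Qed.
Lemma iD x y : i (x + y) = i x + i y.
Proof. by have := ilin 1 x y; rewrite !scale1r. Qed.
Lemma iZ a x : i (a *: x) = a *: i x.
Proof. by have := ilin a x 0; rewrite !addr0 i0 addr0. Qed.
Lemma iN x : i (- x) = - i x.
Proof. by rewrite -scaleN1r iZ scaleN1r. Qed.
Lemma iB x y : i (x - y) = i x - i y.
Proof. by rewrite iD iN. Qed.
Lemma inz x : x <> 0 -> i x <> 0.
Proof. by move=> nx E; apply: nx; apply: iinj; rewrite E i0. Qed.

Lemma dens p q : p <> 0 ->
  (exists x, lcolon (S := bspace_of S) i q x /\ lbr (i x) p <> 0) \/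
  (exists y, lcolon (S := bspace_of S) i q y /\ lbr p (i y) <> 0).
Proof. by case: Hi => _ H np; apply: H. Qed.

Definition C s := lcolon (S := bspace_of S) i s.

Lemma lsub_self s : lsub (S := bspace_of S) i s s.
Proof. by exists 1, [::]; split=> //=; rewrite scale1r addr0. Qed.

Lemma C_s s x : C s x -> (exists y, lbr (i x) s = i y) /\ (exists y, lbr s (i x) = i y).
Proof. by move=> H; apply: H => //; apply: lsub_self. Qed.

Lemma bsum_brL s z (ws : seq (F * seq (bool * L))) :
  lbr (i z) (bsum (B := bspace_of S) [seq bscale t.1 (wapp (S := bspace_of S) i t.2 s) | t <- ws]) =
  bsum (B := bspace_of S) [seq bscale t.1 (wapp (S := bspace_of S) i t.2 s) | t <- [seq (t.1, (false, z) :: t.2) | t <- ws]].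
Proof.
elim: ws => [|t ws IH] /=; first by rewrite br0r.
by rewrite brDr brZr IH.
Qed.

Lemma bsum_brR s z (ws : seq (F * seq (bool * L))) :
  lbr (bsum (B := bspace_of S) [seq bscale t.1 (wapp (S := bspace_of S) i t.2 s) | t <- ws]) (i z) =
  bsum (B := bspace_of S) [seq bscale t.1 (wapp (S := bspace_of S) i t.2 s) | t <- [seq (t.1, (true, z) :: t.2) | t <- ws]].
Proof.
elim: ws => [|t ws IH] /=; first by rewrite br0l.
by rewrite brDl brZl IH.
Qed.

Lemma lsub_L s u z : lsub (S := bspace_of S) i s u -> lsub (S := bspace_of S) i s (lbr (i z) u).
Proof.
move=> [a [ws [Hws Hu]]].
exists 0, ((a, [:: (false, z)]) :: [seq (t.1, (false, z) :: t.2) | t <- ws]); split.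
  move=> t; rewrite inE => /orP [/eqP -> //|/mapP [v _ ->] //].
move: Hu => /= ->; rewrite scale0r add0r brDr brZr bsum_brL //.
Qed.

Lemma lsub_R s u z : lsub (S := bspace_of S) i s u -> lsub (S := bspace_of S) i s (lbr u (i z)).
Proof.
move=> [a [ws [Hws Hu]]].
exists 0, ((a, [:: (true, z)]) :: [seq (t.1, (true, z) :: t.2) | t <- ws]); split.
  move=> t; rewrite inE => /orP [/eqP -> //|/mapP [v _ ->] //].
move: Hu => /= ->; rewrite scale0r add0r brDl brZl bsum_brR //.
Qed.


Lemma C_ideal s : ideal (C s).
Proof.
apply/idealP; split.
- by move=> u _ Hu; split; exists 0 => /=; rewrite i0 ?br0l ?br0r.
- move=> x y Cx Cy u _ Hu.
  have [[y1 /= E1] [y2 /= E2]] := Cx u I Hu; have [[y3 /= E3] [y4 /= E4]] := Cy u I Hu.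
  by split; [exists (y1 + y3) | exists (y2 + y4)] => /=; rewrite !iD ?brDl ?brDr ?E1 ?E2 ?E3 ?E4.
- move=> a x Cx u _ Hu; have [[y1 /= E1] [y2 /= E2]] := Cx u I Hu.
  by split; [exists (a *: y1) | exists (a *: y2)] => /=; rewrite !iZ ?brZl ?brZr ?E1 ?E2.
move=> x z Cx; split=> u _ Hu.
  have [[y1 /= E1] _] := Cx _ I (lsub_L z Hu).
  have [[y2 /= E2] [y3 /= E3]] := Cx u I Hu.
  have [_ [y4 /= E4]] := Cx _ I (lsub_R z Hu).
  split; [exists (y1 + lbr y2 z) | exists (lbr y3 z - y4)].
    by rewrite /= ibr br_assoc E1 E2 iD ibr.
  by rewrite /= ibr lbr_leibniz E3 E4 iB ibr.
have [_ [y5 /= E5]] := Cx _ I (lsub_L z Hu).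
have [[y2 /= E2] [y3 /= E3]] := Cx u I Hu.
have [_ [y4 /= E4]] := Cx _ I (lsub_R z Hu).
split; [exists (lbr z y2 + y5) | exists (y4 - lbr y3 z)].
  by rewrite /= ibr br_assoc E2 E5 iD ibr.
by rewrite /= ibr lbr_leibniz E3 E4 iB ibr.
Qed.

Lemma C_ess s : ess (C s).
Proof.
apply/essP; split; first exact: C_ideal.
move=> J HJ [y [Jy ny]].
case: (dens s (inz ny)) => [[x [Cx nxy]] | [x [Cx nxy]]].
  exists (lbr x y); split; first exact: (idBrl (C_ideal s)).
  split; first exact: (idBrr HJ).
  by move=> E; apply: nxy; rewrite -ibr E i0.
exists (lbr y x); split; first exact: (idBrr (C_ideal s)).
split; first exact: (idBrl HJ).
by move=> E; apply: nxy; rewrite -ibr E i0.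
Qed.

Lemma psi_spec s x : C s x -> i (Defs.preim i (lbr (i x) s)) = lbr (i x) s.
Proof.
move=> Cx; case: (C_s Cx) => [[y E] _]; rewrite /Defs.preim.
exact: (epsilon_spec (inhabits 0) (fun z => i z = lbr (i x) s) (ex_intro _ y (esym E))).
Qed.

Lemma psi_pder s : pder (C s) (fun x => Defs.preim i (lbr (i x) s)).
Proof.
have HC := C_ideal s.
split=> [a x y Cx Cy | x y Cx Cy]; apply: iinj.
  by rewrite (psi_spec (idlin HC a Cx Cy)) !ilin !psi_spec // lbrDl.
by rewrite (psi_spec (idBrl HC y Cx)) iD !ibr !psi_spec // br_assoc addrC.
Qed.

Lemma psi_valid s : qvalid (psi i s).
Proof. split; [exact: C_ess | exact: psi_pder]. Qed.

Lemma psi_inj s t : qequiv (psi i s) (psi i t) -> s = t.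
Proof.
move=> [K [EK [HK1 HK2]]].
have HK := ess_ideal EK.
have E : forall k, K k -> lbr (i k) (s - t) = 0.
  move=> k Kk; have [Cs Ct] := HK1 k Kk.
  have /= h := congr1 i (HK2 k Kk); rewrite !psi_spec // in h.
  by rewrite brBr h subrr.
apply: NNPP => nst.
have np : s - t <> 0 by move/eqP; rewrite subr_eq0 => /eqP.
case: (dens (s - t) np) => [[x [Cx nx]] | [x [Cx nx]]].
  have [[z Ez] _] := C_s Cx.
  have z0 : z = 0.
    apply: (ann_zero sp EK) => k Kk; apply: iinj.
    by rewrite ibr i0 -Ez lbr_leibniz -ibr (E _ (idBrl HK x Kk)) (E _ Kk) br0l subrr.
  by apply: nx; rewrite Ez z0 i0.
have [_ [z Ez]] := C_s Cx.
have z0 : z = 0.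
  apply: (ann_zero sp EK) => k Kk; apply: iinj.
  by rewrite ibr i0 -Ez lbr_leibniz -ibr (E _ (idBrl HK x Kk)) (E _ Kk) br0l subrr.
by apply: nx; rewrite Ez z0 i0.
Qed.

Lemma psi_mono : bmono (bspace_of S) (Qsp L) (psi i).
Proof.
split; first by move=> s _; exact: psi_valid.
split; first by move=> s t _ _ /= ->; apply: qequiv_refl; exact: C_ess.
split.
  move=> a s t _ _.
  exists (fun x => C (a *: s + t) x /\ (C s x /\ C t x)); split.
    by apply: ess_inter; [exact: C_ess | apply: ess_inter; exact: C_ess].
  split=> z [C1 [C2 C3]]; first by split.
  have Caz := idZ (C_ideal s) a C2.
  by apply: iinj; rewrite /= iD !psi_spec // lbrDr iZ brZl.
split.
  move=> s t _ _.
  exists (fun x => C (lbr s t) x /\ sqspan (fun x => C s x /\ C t x) x); split.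
    apply: ess_inter; first exact: C_ess.
    by apply: ess_sq => //; apply: ess_inter; exact: C_ess.
  split=> z [C1 Sq]; first by split.
  have [Cs Ct] := sqspan_sub (ideal_inter (C_ideal s) (C_ideal t)) Sq.
  have Ct' := proj2 (pder_sq (C_ideal s) (psi_pder s) (C_ideal t) Sq).
  have Sq' : sqspan (fun x => C t x /\ C s x) z.
    by apply: sqspan_mono Sq => w [? ?]; split.
  have Cs' := proj2 (pder_sq (C_ideal t) (psi_pder t) (C_ideal s) Sq').
  apply: iinj; rewrite /= iB (psi_spec Ct') (psi_spec Cs') (psi_spec Cs) (psi_spec Ct).
  by rewrite (psi_spec C1) lbr_leibniz.
by move=> s t _ _; exact: psi_inj.
Qed.

Lemma psi_phi x : qequiv (psi i (i x)) (phi x).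
Proof.
exists (C (i x)); split; first exact: C_ess.
split=> z Cz; first by split.
by apply: iinj; rewrite /= psi_spec // ibr.
Qed.

End Psi.

Theorem proposition4p6 (F : fieldType) (L : leibniz F) :
  bsemiprime (bspace_of L) ->
  bsemiprime (Qsp L) /\
  is_aoq (Qsp L) (@phi F L) /\
  (forall (S : leibniz F) (i : L -> S),
     is_aoq (bspace_of S) i ->
     bmono (bspace_of S) (Qsp L) (psi i) /\
     (forall x : L, beq (B := Qsp L) (psi i (i x)) (phi x))).
Proof.
move=> sp; split; first exact: Q_semiprime.
split; first exact: Q_aoq.
move=> S i Hi; split; first exact: psi_mono.
move=> x; exact: psi_phi.
Qed.
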